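(* Let $G$ be a large scale group, let $K$ be a symmetric bounded subset of $G$ containing $1_G$, and let $B$ be a bounded subset of $G$ such that $G\setminus B$ has exactly two $K$-components $L$ and $R$, both unbounded, and $G$ acts trivially on $L$ and on $R$. Suppose one of the following holds: (1) $B$ is $K$-connected; (2) $B\subseteq h\cdot K^n$ for some $h\in G$ and $n\ge1$. Then $G$ has a cyclic subgroup of bounded index.
   Context: A bornology on a set is a cover closed under subsets and finite unions. A large scale group is a group $G$ with a bornology $\mathcal B$ closed under inverses and products; its uniformly bounded covers are the covers refining $\{gB\}_{g\in G}$ for some $B\in\mathcal B$; bounded sets are members of $\mathcal B$. $K^n$ denotes the $n$-fold product set $K\cdots K$. For a symmetric $K\subseteq G$ ($K^{-1}=K$), a $K$-chain is a finite sequence $g_1,\dots,g_k$ in $G$ with $g_i^{-1}g_{i+1}\in K$ for all $i<k$; a set $C$ is $K$-connected if any two of its elements are joined by a $K$-chain in $C$; the $K$-components of $A\subseteq G$ are the equivalence classes of $A$ under the relation ''joined by a $K$-chain lying in $A$''. $G$ acts trivially on $A\subseteq G$ if the symmetric difference $A\,\Delta\,(g\cdot A)$ is bounded for each $g\in G$. A subgroup $H$ is of bounded index if $B'\cdot H=G$ for some bounded $B'$. *)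

(* Defs.v *)
From Stdlib Require Import ZArith.

Set Implicit Arguments.

Record Group := {
  carrier :> Type;
  gmul : carrier -> carrier -> carrier;
  ginv : carrier -> carrier;
  gone : carrier;
  gmulA : forall x y z, gmul x (gmul y z) = gmul (gmul x y) z;
  gmul1l : forall x, gmul gone x = x;
  gmul1r : forall x, gmul x gone = x;
  gmulVl : forall x, gmul (ginv x) x = gone;
  gmulVr : forall x, gmul x (ginv x) = gone
}.

Definition gset (G : Type) := G -> Prop.

Section Sets.
Variable G : Group.

Definition subset (A B : gset G) := forall x, A x -> B x.
Definition seteq (A B : gset G) := forall x, A x <-> B x.
Definition setU (A B : gset G) : gset G := fun x => A x \/ B x.
Definition setD (A B : gset G) : gset G := fun x => A x /\ ~ B x.
Definition setSymD (A B : gset G) : gset G := setU (setD A B) (setD B A).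
Definition setT_ : gset G := fun _ => True.
Definition setinv (A : gset G) : gset G := fun x => exists a, A a /\ x = @ginv G a.
Definition setmul (A B : gset G) : gset G :=
  fun x => exists a b, A a /\ B b /\ x = @gmul G a b.
Definition ltrans (g : G) (A : gset G) : gset G :=
  fun x => exists a, A a /\ x = @gmul G g a.
Fixpoint setpow (K : gset G) (n : nat) : gset G :=
  match n with
  | O => fun x => x = gone G
  | S O => K
  | S m => setmul (setpow K m) K
  end.

Definition gpow (g : G) (n : nat) : G := Nat.iter n (fun y => @gmul G y g) (gone G).
Definition zpow (g : G) (z : Z) : G :=
  match z with
  | Z0 => gone G
  | Zpos p => gpow g (Pos.to_nat p)
  | Zneg p => @ginv G (gpow g (Pos.to_nat p))
  end.
Definition cyclic_sub (g : G) : gset G := fun x => exists z : Z, x = zpow g z.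

Definition symmetric (K : gset G) := forall x, K x <-> K (@ginv G x).

(** [Kjoined K A x y]: x and y are joined by a K-chain lying in A, i.e. a finite
    sequence x = g_1, ..., g_k = y of elements of A with g_i^-1 g_(i+1) in K. *)
Inductive Kjoined (K A : gset G) (x : G) : G -> Prop :=
  | Kj_refl : A x -> Kjoined K A x x
  | Kj_step : forall y z, Kjoined K A x y -> A z -> K (@gmul G (@ginv G y) z) ->
              Kjoined K A x z.

Definition Kconnected (K C : gset G) := forall x y, C x -> C y -> Kjoined K C x y.

(** C is a K-component of A: an equivalence class of A under "joined by a
    K-chain lying in A". *)
Definition Kcomponent (K A C : gset G) :=
  exists x, A x /\ (forall y, C y <-> Kjoined K A x y).

End Sets.

Arguments subset {G}. Arguments seteq {G}. Arguments setU {G}. Arguments setD {G}. Arguments setSymD {G}.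
Arguments setT_ {G}. Arguments setinv {G}. Arguments setmul {G}. Arguments ltrans {G}.
Arguments setpow {G}. Arguments gpow {G}. Arguments zpow {G}. Arguments cyclic_sub {G}.
Arguments symmetric {G}. Arguments Kjoined {G}. Arguments Kconnected {G}.
Arguments Kcomponent {G}.
Arguments gmul {g}. Arguments ginv {g}.

Record LSGroup := {
  lsgrp :> Group;
  bounded : gset lsgrp -> Prop;
  bnd_cover : forall x : lsgrp, exists B, bounded B /\ B x;
  bnd_sub : forall A B, bounded B -> @subset lsgrp A B -> bounded A;
  bnd_union : forall A B, bounded A -> bounded B -> bounded (@setU lsgrp A B);
  bnd_inv : forall A, bounded A -> bounded (@setinv lsgrp A);
  bnd_mul : forall A B, bounded A -> bounded B -> bounded (@setmul lsgrp A B)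
}.

Arguments bounded {l}.

Definition acts_trivially (G : LSGroup) (A : gset G) :=
  forall g : G, bounded (setSymD A (ltrans g A)).

Definition has_cyclic_bounded_index (G : LSGroup) :=
  exists (g : G) (B' : gset G), bounded B' /\
    (forall x : G, setmul B' (cyclic_sub g) x).
Arguments acts_trivially {G}.

(* Main.v *)
Require Import Defs.
From Stdlib Require Import ZArith Lia Classical.
Local Infix "⋅" := gmul (at level 40, left associativity).

Lemma g_cancel_l {G : Group} (a b : G) : ginv a ⋅ (a ⋅ b) = b.
Proof. rewrite gmulA, gmulVl, gmul1l. reflexivity. Qed.
Lemma g_cancel_l' {G : Group} (a b : G) : a ⋅ (ginv a ⋅ b) = b.
Proof. rewrite gmulA, gmulVr, gmul1l. reflexivity. Qed.
Lemma g_inv_uniq {G : Group} (a b : G) : a ⋅ b = gone G -> b = ginv a.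
Proof. intro H. rewrite <- (g_cancel_l a b), H, gmul1r. reflexivity. Qed.
Lemma g_invinv {G : Group} (a : G) : ginv (ginv a) = a.
Proof. symmetry. apply g_inv_uniq. apply gmulVl. Qed.
Lemma g_invM {G : Group} (a b : G) : ginv (a ⋅ b) = ginv b ⋅ ginv a.
Proof. symmetry. apply g_inv_uniq. rewrite gmulA, <- (gmulA _ a b), gmulVr, gmul1r, gmulVr. reflexivity. Qed.
Lemma g_inv1 {G : Group} : ginv (gone G) = gone G.
Proof. symmetry. apply g_inv_uniq. apply gmul1l. Qed.
Lemma g_stepinv {G : Group} (x y z : G) : ginv (x ⋅ y) ⋅ (x ⋅ z) = ginv y ⋅ z.
Proof. rewrite g_invM, <- gmulA, g_cancel_l. reflexivity. Qed.

Lemma Kj_A {G : Group} (K A : gset G) x y : Kjoined K A x y -> A y.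
Proof. induction 1; auto. Qed.
Lemma Kj_A0 {G : Group} (K A : gset G) x y : Kjoined K A x y -> A x.
Proof. induction 1; auto. Qed.
Lemma Kj_trans {G : Group} (K A : gset G) x y z :
  Kjoined K A x y -> Kjoined K A y z -> Kjoined K A x z.
Proof. intros H1 H2. induction H2; auto. eapply Kj_step; eauto. Qed.
Lemma Kj_sym {G : Group} (K A : gset G) x y : symmetric K ->
  Kjoined K A x y -> Kjoined K A y x.
Proof.
  intros HK H. induction H.
  - now apply Kj_refl.
  - eapply Kj_trans; [|exact IHKjoined].
    eapply Kj_step. apply Kj_refl; auto. eapply Kj_A; eauto.
    apply HK. rewrite g_invM, g_invinv. exact H1.
Qed.
Lemma Kj_mono {G : Group} (K A A' : gset G) x y : (forall z, A z -> A' z) ->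
  Kjoined K A x y -> Kjoined K A' x y.
Proof. intros HA H. induction H. apply Kj_refl; auto. eapply Kj_step; eauto. Qed.

Lemma comp_sub {G : Group} (K A C : gset G) y : Kcomponent K A C -> C y -> A y.
Proof. intros [x0 [Hx0 HC]] Hy. apply HC in Hy. eapply Kj_A; eauto. Qed.
Lemma comp_close {G : Group} (K A C : gset G) u v : Kcomponent K A C ->
  C u -> A v -> K (ginv u ⋅ v) -> C v.
Proof. intros [x0 [Hx0 HC]] Hu Hv Hk. apply HC. apply HC in Hu. eapply Kj_step; eauto. Qed.
Lemma comp_in {G : Group} (K A : gset G) x y : Kjoined K A x y ->
  Kjoined K (fun z => Kjoined K A x z) x y.
Proof.
  intro H. induction H. apply Kj_refl. now apply Kj_refl.
  apply (Kj_step _ IHKjoined); auto. simpl. eapply Kj_step; eauto.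
Qed.
Lemma comp_chain {G : Group} (K A C : gset G) y z : symmetric K -> Kcomponent K A C ->
  C y -> C z -> Kjoined K C y z.
Proof.
  intros HK HCc Hy Hz. destruct HCc as [x0 [Hx0 HC]].
  assert (E : forall w, C w -> Kjoined K C x0 w).
  { intros w Hw. apply HC in Hw. apply comp_in in Hw.
    eapply Kj_mono; [|exact Hw]. intros t Ht. now apply HC. }
  eapply Kj_trans; [apply Kj_sym; [exact HK| apply E; exact Hy] | apply E; exact Hz].
Qed.
Lemma comp_iff {G : Group} (K A C : gset G) y : symmetric K -> Kcomponent K A C ->
  C y -> forall z, C z <-> Kjoined K A y z.
Proof.
  intros HK HCc Hy z. pose proof HCc as [x0 [Hx0 HC]]. split; intro Hz.
  - eapply Kj_mono; [|eapply comp_chain; eauto]. intros t Ht; eapply comp_sub; eauto.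
  - apply HC. apply HC in Hy. eapply Kj_trans; eauto.
Qed.

Lemma CL {G : Group} (K A C S : gset G) (x u v : G) : Kcomponent K A C ->
  Kjoined K S u v -> (forall s, S s -> A (x ⋅ s)) -> C (x ⋅ u) -> C (x ⋅ v).
Proof.
  intros HC H HS Hu. induction H; auto.
  eapply comp_close; eauto. rewrite g_stepinv. auto.
Qed.
Lemma RCL {G : Group} (K S P : gset G) (c u v : G) :
  (forall s k, P s -> K k -> P (s ⋅ k)) ->
  Kjoined K S u v -> P (c ⋅ u) -> P (c ⋅ v).
Proof.
  intros HP H Hu. induction H; auto.
  replace (c ⋅ z) with (c ⋅ y ⋅ (ginv y ⋅ z)). apply HP; auto.
  rewrite <- gmulA, g_cancel_l'. reflexivity.
Qed.

Definition ltr {G : Group} (h : G) (n : nat) (x : G) : G := Nat.iter n (fun y => h ⋅ y) x.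

Lemma ltr_mulr {G : Group} (h x k : G) n : ltr h n (x ⋅ k) = ltr h n x ⋅ k.
Proof. induction n; simpl; auto. unfold ltr in *. simpl. rewrite IHn, gmulA. reflexivity. Qed.
Lemma ltr_S {G : Group} (h x : G) n : ltr h (S n) x = h ⋅ ltr h n x.
Proof. reflexivity. Qed.
Lemma ltr_Sr {G : Group} (h x : G) n : ltr h (S n) x = ltr h n (h ⋅ x).
Proof. unfold ltr. apply Nat.iter_succ_r. Qed.
Lemma ltr_add {G : Group} (h x : G) n m : ltr h (n + m) x = ltr h n (ltr h m x).
Proof. unfold ltr. apply Nat.iter_add. Qed.
Lemma ltr_inv {G : Group} (g h x : G) n : g ⋅ h = gone G -> ltr g n (ltr h n x) = x.
Proof.
  intro E. revert x. induction n; intro x; auto.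
  rewrite ltr_Sr, ltr_S, gmulA, E, gmul1l. apply IHn.
Qed.

Lemma RCL' {G : Group} (K S P : gset G) (u v : G) :
  (forall s k, P s -> K k -> P (s ⋅ k)) ->
  Kjoined K S u v -> P u -> P v.
Proof.
  intros HP H Hu. induction H; auto.
  replace z with (y ⋅ (ginv y ⋅ z)). apply HP; auto.
  apply g_cancel_l'.
Qed.

Lemma lemI {G : Group} (K B D L R : gset G) (g h : G) :
  symmetric K -> Kcomponent K (fun x => ~ B x) L ->
  (forall y, ~ (L y /\ R y)) -> (forall w, B w -> D w) -> (exists d, D d) ->
  h ⋅ g = gone G -> g ⋅ h = gone G ->
  (forall w, D w -> L (g ⋅ w)) -> (forall w, D w -> R (h ⋅ w)) ->
  (forall r, R r -> R (h ⋅ r)) ->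
  forall x, exists n, ~ L (ltr h n x).
Proof.
  intros HK HL Hdis HBD [d Hd] Ehg Egh H1 H2 H3 x.
  apply NNPP; intro Hn.
  assert (Hx : forall n, L (ltr h n x)).
  { intro n. apply NNPP; intro Hc. apply Hn. exists n; exact Hc. }
  set (I := fun z => forall n, L (ltr h n z)).
  assert (Istep : forall z k, I z -> K k -> I (z ⋅ k)).
  { intros z k Hz Hk n. rewrite ltr_mulr. set (u := ltr h n z).
    destruct (classic (B (u ⋅ k))) as [Hb|Hb].
    - exfalso. assert (HR : R (h ⋅ (h ⋅ (u ⋅ k)))) by (apply H3, H2, HBD, Hb).
      assert (e : h ⋅ (h ⋅ (u ⋅ k)) = ltr h (S (S n)) z ⋅ k).
      { rewrite !ltr_S. fold u. rewrite !gmulA. reflexivity. }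
      assert (HL2 : L (ltr h (S (S n)) z)) by apply Hz.
      destruct (classic (B (h ⋅ (h ⋅ (u ⋅ k))))) as [Hb2|Hb2].
      + apply HBD, H1 in Hb2.
        rewrite gmulA, Egh, gmul1l in Hb2. apply (Hdis (h ⋅ (u ⋅ k))). split; auto.
      + apply (Hdis (h ⋅ (h ⋅ (u ⋅ k)))). split; auto.
        rewrite e. eapply comp_close; [exact HL|exact HL2| |]. rewrite <- e; exact Hb2.
        rewrite g_cancel_l. exact Hk.
    - apply (comp_close K _ L u (u ⋅ k) HL (Hz n) Hb). rewrite g_cancel_l. exact Hk. }
  assert (LI : forall y, L y -> I y).
  { intros y Hy. apply (RCL' K L I x y Istep); [|exact Hx].
    eapply comp_chain; eauto. apply (Hx 0). }
  pose proof (LI _ (H1 d Hd) 2) as HH. rewrite !ltr_S in HH. simpl in HH.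
  rewrite (gmulA _ h g), Ehg, gmul1l in HH.
  apply (Hdis (h ⋅ d)). split; auto.
Qed.

Lemma lemS (G : LSGroup) (K B D L R : gset G) (g h : G) :
  symmetric K -> Kcomponent K (fun x => ~ B x) L -> Kcomponent K (fun x => ~ B x) R ->
  (forall y, ~ B y -> L y \/ R y) -> (forall y, ~ (L y /\ R y)) ->
  (forall w, B w -> D w) -> h ⋅ g = gone G ->
  (forall w, D w -> R (h ⋅ w)) -> acts_trivially L -> ~ bounded L ->
  forall l, L l -> L (g ⋅ l).
Proof.
  intros HK HL HR Hdich Hdis HBD Ehg H2 Ht Hu.
  assert (Hnb : forall z, L z -> ~ B (g ⋅ z)).
  { intros z Hz Hb. apply HBD, H2 in Hb. rewrite gmulA, Ehg, gmul1l in Hb.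
    apply (Hdis z); auto. }
  pose proof HL as [x0 [Hx0 HC]].
  assert (Lx0 : L x0) by (apply HC; now apply Kj_refl).
  assert (prop : forall C, Kcomponent K (fun x => ~ B x) C -> C (g ⋅ x0) ->
            forall l, L l -> C (g ⋅ l)).
  { intros C HCc Hc l Hl. apply (CL K _ C L g x0 l HCc); [ | exact Hnb | exact Hc].
    apply (comp_chain K _ L x0 l HK HL Lx0 Hl). }
  destruct (Hdich _ (Hnb _ Lx0)) as [H|H].
  - apply prop; auto.
  - exfalso. apply Hu. eapply bnd_sub; [apply (Ht g)|].
    intros l Hl. left. split; auto. intros [a [Ha E]]. subst l.
    apply (Hdis (g ⋅ a)). split; auto. apply (prop R HR H a Ha).
Qed.

Lemma bnd_single (G : LSGroup) (x : G) : bounded (fun y : G => y = x).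
Proof.
  destruct (bnd_cover G x) as [B0 [HB0 Hx]]. eapply bnd_sub; [exact HB0|].
  intros y ->. exact Hx.
Qed.

Lemma step0 (G : LSGroup) (K B D L R : gset G) :
  symmetric K -> Kcomponent K (fun x => ~ B x) L -> Kcomponent K (fun x => ~ B x) R ->
  (forall y, ~ B y -> L y \/ R y) -> (forall y, ~ (L y /\ R y)) ->
  (forall w, B w -> D w) -> bounded B -> bounded D -> Kconnected K D -> (exists d, D d) ->
  ~ bounded L -> ~ bounded R -> acts_trivially R ->
  exists g : G, (forall w, D w -> L (g ⋅ w)) /\ (forall w, D w -> R (ginv g ⋅ w)).
Proof.
  intros HK HL HR Hdich Hdis HBD HBb HDb HDc [d0 Hd0] HLu HRu HtR.
  set (E := setU (setmul B (setinv D)) (setmul D (setinv B))).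
  assert (HE : bounded E).
  { apply bnd_union; apply bnd_mul; auto; apply bnd_inv; auto. }
  assert (Hex : exists x, L (x ⋅ d0) /\ ~ E x).
  { apply NNPP; intro Hn. apply HLu.
    eapply bnd_sub; [apply (bnd_mul _ _ _ HE (bnd_single G d0))|].
    intros l Hl. exists (l ⋅ ginv d0), d0.
    assert (e : l ⋅ ginv d0 ⋅ d0 = l) by (rewrite <- gmulA, gmulVl, gmul1r; reflexivity).
    split; [|split; [reflexivity| symmetry; exact e]].
    apply NNPP; intro HnE. apply Hn. exists (l ⋅ ginv d0). rewrite e. auto. }
  destruct Hex as [x [Hxd0 HxE]].
  assert (Hx1 : forall w, D w -> ~ B (x ⋅ w)).
  { intros w Hw Hb. apply HxE. left. exists (x ⋅ w), (ginv w). split; auto.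
    split. exists w; auto. rewrite <- gmulA, gmulVr, gmul1r. reflexivity. }
  assert (Hx2 : forall w, D w -> ~ B (ginv x ⋅ w)).
  { intros w Hw Hb. apply HxE. right. exists w, (ginv (ginv x ⋅ w)). split; auto.
    split. exists (ginv x ⋅ w); auto. rewrite g_invM, g_invinv, g_cancel_l'. reflexivity. }
  assert (HxD : forall w, D w -> L (x ⋅ w)).
  { intros w Hw. apply (CL K _ L D x d0 w HL (HDc d0 w Hd0 Hw) Hx1 Hxd0). }
  destruct (Hdich _ (Hx2 d0 Hd0)) as [HiL|HiR].
  2:{ exists x. split; auto. intros w Hw.
      apply (CL K _ R D (ginv x) d0 w HR (HDc d0 w Hd0 Hw) Hx2 HiR). }
  exfalso.
  assert (HxiD : forall w, D w -> L (ginv x ⋅ w)).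
  { intros w Hw. apply (CL K _ L D (ginv x) d0 w HL (HDc d0 w Hd0 Hw) Hx2 HiL). }
  assert (HxR : forall r, R r -> ~ B (x ⋅ r)).
  { intros r Hr Hb. apply HBD, HxiD in Hb. rewrite g_cancel_l in Hb. apply (Hdis r); auto. }
  pose proof HR as [r0 [Hr0 HCR]].
  assert (Rr0 : R r0) by (apply HCR; now apply Kj_refl).
  pose proof HL as [l0 [Hl0 HCL]].
  assert (Ll0 : L l0) by (apply HCL; now apply Kj_refl).
  assert (prop : forall C, Kcomponent K (fun x => ~ B x) C -> C (x ⋅ r0) ->
            forall r, R r -> C (x ⋅ r)).
  { intros C HCc Hc r Hr. apply (CL K _ C R x r0 r HCc); [ | exact HxR | exact Hc].
    apply (comp_chain K _ R r0 r HK HR Rr0 Hr). }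
  destruct (Hdich _ (HxR _ Rr0)) as [H|H].
  - apply HRu. eapply bnd_sub; [apply (HtR x)|].
    intros r Hr. left. split; auto. intros [a [Ha Ea]]. subst r.
    apply (Hdis (x ⋅ a)). split; auto. apply (prop L HL H a Ha).
  - destruct (classic (exists r d, R r /\ D d /\ K (ginv r ⋅ d))) as [[r [d [Hr [Hd Hk]]]]|Hna].
    + apply (Hdis (x ⋅ d)). split; auto.
      apply (comp_close K _ R (x ⋅ r) (x ⋅ d) HR (prop R HR H r Hr)).
      apply (comp_sub K _ L (x ⋅ d) HL (HxD d Hd)). rewrite g_stepinv. exact Hk.
    + assert (Hrc : forall s k, R s -> K k -> R (s ⋅ k)).
      { intros s k Hs Hk. destruct (classic (B (s ⋅ k))) as [Hb|Hb].
        - exfalso. apply Hna. exists s, (s ⋅ k). split; auto. split. apply HBD; auto.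
          rewrite g_cancel_l. exact Hk.
        - apply (comp_close K _ R s (s ⋅ k) HR Hs Hb). rewrite g_cancel_l. exact Hk. }
      assert (Hall : forall y, R y).
      { intro y. set (c := y ⋅ ginv r0).
        destruct (classic (exists a, R a /\ R (c ⋅ a))) as [[a [Ha Hca]]|Hn].
        - replace y with (c ⋅ r0) by (unfold c; rewrite <- gmulA, gmulVl, gmul1r; reflexivity).
          apply (RCL K R R c a r0 Hrc); auto.
          apply (comp_chain K _ R a r0 HK HR Ha Rr0).
        - exfalso. apply HRu. eapply bnd_sub; [apply (HtR c)|].
          intros r Hr. left. split; auto. intros [a [Ha Ea]]. subst r.
          apply Hn. exists a. auto. }
      apply (Hdis l0). auto.
Qed.

Lemma pow_one (G : Group) (K : gset G) m : K (gone G) -> setpow K (S m) (gone G).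
Proof.
  intro H1. induction m. exact H1.
  change (setmul (setpow K (S m)) K (gone G)). exists (gone G), (gone G).
  split; auto. split; auto. rewrite gmul1l. reflexivity.
Qed.

Lemma pow_conn (G : Group) (K : gset G) m : K (gone G) ->
  forall x, setpow K (S m) x -> Kjoined K (setpow K (S m)) (gone G) x.
Proof.
  intro H1. induction m; intros x Hx.
  - eapply Kj_step. apply Kj_refl; exact H1. exact Hx. rewrite g_inv1, gmul1l. exact Hx.
  - destruct Hx as [a [k [Ha [Hk ->]]]].
    eapply Kj_step.
    + eapply Kj_mono; [|apply IHm; exact Ha].
      intros z Hz. exists z, (gone G). split; auto. split; auto. rewrite gmul1r; reflexivity.
    + exists a, k; auto.
    + rewrite g_cancel_l. exact Hk.
Qed.

Lemma ltrans_conn (G : Group) (K S : gset G) (h u v : G) :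
  Kjoined K S u v -> Kjoined K (ltrans h S) (h ⋅ u) (h ⋅ v).
Proof.
  intro H; induction H as [Hu | y z H IH Hz Hk]. apply Kj_refl. exists u; auto.
  eapply Kj_step; eauto. exists z; auto. rewrite g_stepinv. auto.
Qed.

Lemma pow_bnd (G : LSGroup) (K : gset G) m : bounded K -> bounded (setpow K (S m)).
Proof.
  intro HK. induction m. exact HK.
  change (bounded (setmul (setpow K (S m)) K)). apply bnd_mul; auto.
Qed.

Lemma Dexists (G : LSGroup) (K B : gset G) :
  symmetric K -> bounded K -> K (gone G) -> bounded B ->
  (Kconnected K B \/ exists (h : G) (n : nat), 1 <= n /\ subset B (ltrans h (setpow K n))) ->
  exists D, bounded D /\ Kconnected K D /\ (forall w, B w -> D w) /\ exists d, D d.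
Proof.
  intros HK HKb H1 HB [Hc | [h [n [Hn Hsub]]]].
  - destruct (classic (exists b, B b)) as [Hne|Hne].
    + exists B. auto.
    + exists (fun y => y = gone G). split; [apply bnd_single|]. split.
      * intros x y -> ->. apply Kj_refl. reflexivity.
      * split; [|exists (gone G); reflexivity]. intros w Hw. exfalso. apply Hne. eauto.
  - destruct n as [|m]; [lia|].
    exists (ltrans h (setpow K (S m))). split.
    + eapply bnd_sub; [apply (bnd_mul _ _ _ (bnd_single G h) (pow_bnd G K m HKb))|].
      intros x [a [Ha ->]]. exists h, a. auto.
    + split; [|split; [exact Hsub| exists (h ⋅ gone G), (gone G); split; [apply pow_one; auto| reflexivity]]].
      intros x y [a [Ha ->]] [b [Hb ->]]. apply ltrans_conn.
      eapply Kj_trans; [apply Kj_sym; [exact HK| apply pow_conn; auto] | apply pow_conn; auto].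
Qed.

Lemma gpow_comm (G : Group) (g : G) n : gpow g n ⋅ g = g ⋅ gpow g n.
Proof.
  induction n. simpl. rewrite gmul1l, gmul1r. reflexivity.
  change (gpow g (S n)) with (gpow g n ⋅ g). rewrite IHn at 1. rewrite gmulA. reflexivity.
Qed.
Lemma zpow_nat (G : Group) (g : G) n : exists z, zpow g z = gpow g n.
Proof.
  destruct n. exists Z0. reflexivity.
  exists (Zpos (Pos.of_succ_nat n)). simpl. rewrite SuccNat2Pos.id_succ. reflexivity.
Qed.
Lemma zpow_negnat (G : Group) (g : G) n : exists z, zpow g z = ginv (gpow g n).
Proof.
  destruct n. exists Z0. simpl. rewrite g_inv1. reflexivity.
  exists (Zneg (Pos.of_succ_nat n)). simpl. rewrite SuccNat2Pos.id_succ. reflexivity.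
Qed.
Lemma cyc_mul (G : Group) (g w : G) : cyclic_sub g w ->
  cyclic_sub g (w ⋅ g) /\ cyclic_sub g (w ⋅ ginv g).
Proof.
  intros [z ->]. unfold cyclic_sub.
  assert (A1 : forall n, exists z, zpow g z = gpow g n ⋅ g).
  { intro n. apply (zpow_nat G g (S n)). }
  assert (A2 : forall n, exists z, zpow g z = ginv (gpow g n) ⋅ g).
  { intro n. destruct n.
    - destruct (zpow_nat G g 1) as [z' E]. exists z'. rewrite E. simpl.
      rewrite g_inv1. reflexivity.
    - destruct (zpow_negnat G g n) as [z' E]. exists z'. rewrite E.
      change (gpow g (S n)) with (gpow g n ⋅ g). rewrite (gpow_comm G g n). rewrite g_invM, <- gmulA, gmulVl, gmul1r.
      reflexivity. }
  assert (A3 : forall n, exists z, zpow g z = gpow g n ⋅ ginv g).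
  { intro n. destruct n.
    - destruct (zpow_negnat G g 1) as [z' E]. exists z'. rewrite E. simpl. rewrite !gmul1l. reflexivity.
    - destruct (zpow_nat G g n) as [z' E]. exists z'. rewrite E.
      change (gpow g (S n)) with (gpow g n ⋅ g). rewrite <- gmulA, gmulVr, gmul1r. reflexivity. }
  assert (A4 : forall n, exists z, zpow g z = ginv (gpow g n) ⋅ ginv g).
  { intro n. destruct (zpow_negnat G g (S n)) as [z' E]. exists z'. rewrite E.
    change (gpow g (S n)) with (gpow g n ⋅ g). rewrite (gpow_comm G g n), g_invM. reflexivity. }
  destruct z as [|p|p]; simpl.
  - split; [destruct (A1 0) as [z' E] | destruct (A3 0) as [z' E]]; exists z'; rewrite E; reflexivity.
  - split; [destruct (A1 (Pos.to_nat p)) as [z' E] | destruct (A3 (Pos.to_nat p)) as [z' E]]; exists z'; rewrite E; reflexivity.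
  - split; [destruct (A2 (Pos.to_nat p)) as [z' E] | destruct (A4 (Pos.to_nat p)) as [z' E]]; exists z'; rewrite E; reflexivity.
Qed.

Lemma nat_switch (P : nat -> Prop) N : P N -> ~ P 0 -> exists j, ~ P j /\ P (S j).
Proof.
  induction N; intros HN H0. contradiction.
  destruct (classic (P N)) as [H|H]. apply IHN; auto. exists N; auto.
Qed.

Theorem proposition5p6 (G : LSGroup) (K B L R : gset G) :
  symmetric K -> bounded K -> K (gone G) ->
  bounded B ->
  (* G \ B has exactly two K-components L and R *)
  Kcomponent K (fun x => ~ B x) L -> Kcomponent K (fun x => ~ B x) R -> ~ seteq L R ->
  (forall C, Kcomponent K (fun x => ~ B x) C -> seteq C L \/ seteq C R) ->
  ~ bounded L -> ~ bounded R ->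
  acts_trivially L -> acts_trivially R ->
  (Kconnected K B \/
   exists (h : G) (n : nat), 1 <= n /\ subset B (ltrans h (setpow K n))) ->
  has_cyclic_bounded_index G.
Proof.
  intros HK HKb HK1 HB HL HR HLR Hall HLu HRu HtL HtR Hcase.
  assert (Hdich : forall y, ~ B y -> L y \/ R y).
  { intros y Hy. set (C := fun z => Kjoined K (fun x => ~ B x) y z).
    assert (HC : Kcomponent K (fun x => ~ B x) C) by (exists y; split; [exact Hy| tauto]).
    assert (Cy : C y) by (apply Kj_refl; exact Hy).
    destruct (Hall C HC) as [E|E]; [left|right]; apply E; exact Cy. }
  assert (Hdis : forall y, ~ (L y /\ R y)).
  { intros y [Hy1 Hy2]. apply HLR. intro z.
    rewrite (comp_iff K _ L y HK HL Hy1 z), (comp_iff K _ R y HK HR Hy2 z). tauto. }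
  destruct (Dexists G K B HK HKb HK1 HB Hcase) as [D [HDb [HDc [HBD HDne]]]].
  destruct (step0 G K B D L R HK HL HR Hdich Hdis HBD HB HDb HDc HDne HLu HRu HtR)
    as [g [H1 H2]].
  set (h := ginv g).
  assert (Ehg : h ⋅ g = gone G) by apply gmulVl.
  assert (Egh : g ⋅ h = gone G) by apply gmulVr.
  assert (SL : forall l, L l -> L (g ⋅ l))
    by (apply (lemS G K B D L R g h HK HL HR Hdich Hdis HBD Ehg H2 HtL HLu)).
  assert (Hdich' : forall y, ~ B y -> R y \/ L y) by (intros y Hy; destruct (Hdich y Hy); auto).
  assert (Hdis' : forall y, ~ (R y /\ L y)) by (intros y [? ?]; apply (Hdis y); auto).
  assert (SR : forall r, R r -> R (h ⋅ r))
    by (apply (lemS G K B D R L h g HK HR HL Hdich' Hdis' HBD Egh H1 HtR HRu)).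
  set (A := fun y => L y /\ ~ L (h ⋅ y)).
  assert (HA : bounded A).
  { eapply bnd_sub; [apply (HtL g)|]. intros y [Hy Hny]. left. split; auto.
    intros [a [Ha ->]]. apply Hny. unfold h. rewrite g_cancel_l. exact Ha. }
  exists g, (setinv A). split; [apply bnd_inv; exact HA|].
  intro x.
  set (Q := fun u => setmul (setinv A) (cyclic_sub g) (ginv u)).
  assert (Qg : forall u, Q (g ⋅ u) -> Q u).
  { intros u [a [b [Ha [Hb E]]]]. exists a, (b ⋅ g). split; auto. split.
    apply cyc_mul; auto. rewrite gmulA, <- E, g_invM, <- gmulA, gmulVl, gmul1r. reflexivity. }
  assert (Qh : forall u, Q (h ⋅ u) -> Q u).
  { intros u [a [b [Ha [Hb E]]]]. exists a, (b ⋅ ginv g). split; auto. split.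
    apply cyc_mul; auto. rewrite gmulA, <- E. unfold h. rewrite g_invM, g_invinv, <- gmulA, gmulVr, gmul1r. reflexivity. }
  assert (Qgi : forall k u, Q (ltr g k u) -> Q u).
  { induction k; intros u Hq; [exact Hq | apply IHk, Qg; exact Hq]. }
  assert (Qhi : forall k u, Q (ltr h k u) -> Q u).
  { induction k; intros u Hq; [exact Hq | apply IHk, Qh; exact Hq]. }
  set (u := ginv x).
  destruct (lemI K B D L R g h HK HL Hdis HBD HDne Ehg Egh H1 H2 SR u) as [n Hn].
  destruct (lemI K B D R L h g HK HR Hdis' HBD HDne Egh Ehg H2 H1 SL u) as [m Hm].
  assert (Hm' : exists m', L (ltr g m' u)).
  { destruct (classic (B (ltr g m u))) as [Hb|Hb].
    - exists (S m). rewrite ltr_S. apply H1, HBD, Hb.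
    - exists m. destruct (Hdich _ Hb); [auto | contradiction]. }
  destruct Hm' as [m' Hm'].
  set (v := ltr h n u).
  destruct (nat_switch (fun j => L (ltr g j v)) (m' + n)) as [j [Hj1 Hj2]].
  { simpl. unfold v. rewrite ltr_add, (ltr_inv g h u n Egh). exact Hm'. }
  { exact Hn. }
  assert (Qy : Q (ltr g (S j) v)).
  { exists (ginv (ltr g (S j) v)), (gone G). split.
    - exists (ltr g (S j) v). split; auto. split; auto. rewrite ltr_S. unfold h.
      rewrite g_cancel_l. exact Hj1.
    - split. exists Z0. reflexivity. rewrite gmul1r. reflexivity. }
  apply Qgi in Qy. apply Qhi in Qy. unfold Q, u in Qy. rewrite g_invinv in Qy. exact Qy.
Qed.
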